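(* Let $R,S,T$ be $\mathfrak h$-modules and let $f:R\otimes S\to T$ be an (even) $\mathfrak h$-intertwiner, where $R\otimes S$ carries the tensor product action. There is a unique even linear map $Q_f:R\otimes\mathrm{Ind}(S)\to\mathrm{Ind}(T)$ such that (1) $Q_f(r\otimes s)=f(r\otimes s)$ for all $r\in R$, $s\in S$, and (2) for all $a\in\mathfrak h$, $m\in\mathbb Z$, $a_m\circ Q_f=Q_f\circ(\delta_{m,0}\,a\otimes\mathrm{id}+\mathrm{id}\otimes a_m)$.
   Context: Super vector spaces over $\mathbb C$, Koszul sign rule (e.g. $(\mathrm{id}\otimes a_m)(r\otimes v)=(-1)^{|a||r|}r\otimes a_mv$). $\mathfrak h$ is a nonzero finite-dimensional abelian Lie superalgebra with even non-degenerate supersymmetric form $(-,-)$; modes $a_m$ ($a\in\mathfrak h$, $m\in\mathbb Z$) satisfy $[a_m,b_n]=m(a,b)\delta_{m+n,0}K$ with $K$ central. For an $\mathfrak h$-module $S$, $\mathrm{Ind}(S)=U(\hat{\mathfrak h})\otimes_{U(\hat{\mathfrak h}_{\ge0}\oplus\mathbb CK)}S$, where $a_m$ ($m>0$) acts by $0$ on $S$, $a_0$ by $a$, and $K$ by $1$; $S\subset\mathrm{Ind}(S)$. *)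

(* Defs.v *)
From HB Require Import structures.
From mathcomp Require Import all_boot all_algebra.
From mathcomp Require Import complex.
From mathcomp Require Import Rstruct.

Set Implicit Arguments.
Unset Strict Implicit.
Unset Printing Implicit Defensive.
Import GRing.Theory.
Local Open Scope ring_scope.

Notation C := (complex Rdefinitions.R).

(* Koszul sign (-1)^{p q} for parities p q : bool (false = even, true = odd). *)
Definition ksign (p q : bool) : C := if p && q then -1 else 1.

(* Super vector spaces: a C-vector space V together with a Z/2-grading
   V = V_0 (+) V_1.  [spar p v] means "v is homogeneous of parity p"
   (0 is homogeneous of both parities). *)
Record superStr (V : lmodType C) := SuperStr {
  spar : bool -> V -> Prop;
  spar_sub : forall p (c : C) (u v : V), spar p u -> spar p v -> spar p (c *: u + v);
  spar0 : forall p, spar p 0;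
  spar_disj : forall v, spar false v -> spar true v -> v = 0;
  spar_span : forall v, exists v0 v1, [/\ spar false v0, spar true v1 & v = v0 + v1]
}.

Definition even_linear (V W : lmodType C) (sV : superStr V) (sW : superStr W)
  (g : V -> W) : Prop :=
  (forall (c : C) u v, g (c *: u + v) = c *: g u + g v) /\
  (forall p v, spar sV p v -> spar sW p (g v)).

(* Even bilinear maps V x W -> U; these are exactly (the data of) even linear
   maps V (x) W -> U on the super tensor product, via v (x) w |-> g v w. *)
Definition even_bilinear (V W U : lmodType C)
  (sV : superStr V) (sW : superStr W) (sU : superStr U) (g : V -> W -> U) : Prop :=
  [/\ forall (c : C) v v' w, g (c *: v + v') w = c *: g v w + g v' w,
      forall (c : C) v w w', g v (c *: w + w') = c *: g v w + g v w'
    & forall p q v w, spar sV p v -> spar sW q w -> spar sU (addb p q) (g v w)].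

(* The abelian Lie superalgebra h: a nonzero finite-dimensional super vector
   space (with zero bracket) with an even non-degenerate supersymmetric
   bilinear form. *)
Record heisData := HeisData {
  hsp : vectType C;
  hstr : superStr hsp;
  hform : hsp -> hsp -> C;
  hform_linl : forall (c : C) a a' b, hform (c *: a + a') b = c * hform a b + hform a' b;
  hform_linr : forall (c : C) a b b', hform a (c *: b + b') = c * hform a b + hform a b';
  hform_even : forall p q a b, spar hstr p a -> spar hstr q b -> p != q -> hform a b = 0;
  hform_supersym : forall p q a b, spar hstr p a -> spar hstr q b ->
                     hform a b = ksign p q * hform b a;
  hform_nondeg : forall a, (forall b, hform a b = 0) -> a = 0;
  hsp_nonzero : exists a : hsp, a != 0
}.

(* h-modules (h abelian, so the action operators supercommute). *)
Record hmod (H : heisData) := HMod {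
  hm_sp : lmodType C;
  hm_str : superStr hm_sp;
  hm_act : hsp H -> hm_sp -> hm_sp;
  hm_act_linl : forall (c : C) a a' v, hm_act (c *: a + a') v = c *: hm_act a v + hm_act a' v;
  hm_act_linr : forall (c : C) a v v', hm_act a (c *: v + v') = c *: hm_act a v + hm_act a v';
  hm_act_par : forall p q a v, spar (hstr H) p a -> spar hm_str q v ->
                 spar hm_str (addb p q) (hm_act a v);
  hm_act_comm : forall p q a b v, spar (hstr H) p a -> spar (hstr H) q b ->
                 hm_act a (hm_act b v) = ksign p q *: hm_act b (hm_act a v)
}.

(* Modules over the Heisenberg Lie superalgebra hat h = h (x) C[t,t^-1] (+) C K
   on which K acts by 1.  [hat_mode a m] is the action of a_m. *)
Record hatmod (H : heisData) := HatMod {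
  hat_sp : lmodType C;
  hat_str : superStr hat_sp;
  hat_mode : hsp H -> int -> hat_sp -> hat_sp;
  hat_linl : forall (c : C) a a' m v,
      hat_mode (c *: a + a') m v = c *: hat_mode a m v + hat_mode a' m v;
  hat_linr : forall (c : C) a m v v',
      hat_mode a m (c *: v + v') = c *: hat_mode a m v + hat_mode a m v';
  hat_par : forall p q a m v, spar (hstr H) p a -> spar hat_str q v ->
      spar hat_str (addb p q) (hat_mode a m v);
  hat_comm : forall p q a b (m n : int) v, spar (hstr H) p a -> spar (hstr H) q b ->
      hat_mode a m (hat_mode b n v) - ksign p q *: hat_mode b n (hat_mode a m v)
      = ((m%:~R * hform a b) * (if m + n == 0 then 1 else 0)) *: v
}.

(* Even homomorphisms of (hat h_{>=0} (+) C K)-modules from S (with a_m, m>0,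
   acting by 0, a_0 by a, K by 1) to the restriction of a hat h-module N. *)
Definition is_bhom (H : heisData) (S : hmod H) (N : hatmod H)
  (phi : hm_sp S -> hat_sp N) : Prop :=
  [/\ even_linear (hm_str S) (hat_str N) phi,
      forall a s, phi (hm_act a s) = hat_mode a 0 (phi s)
    & forall a (m : int) s, (0 < m)%R -> hat_mode a m (phi s) = 0].

Definition is_hathom (H : heisData) (M N : hatmod H)
  (psi : hat_sp M -> hat_sp N) : Prop :=
  even_linear (hat_str M) (hat_str N) psi /\
  (forall a m v, psi (hat_mode a m v) = hat_mode a m (psi v)).

(* Ind(S) = U(hat h) (x)_{U(hat h_{>=0} (+) C K)} S, given (as usual, up to
   unique isomorphism) by its defining universal property (Frobenius
   reciprocity): a hat h-module Ind(S) with the inclusion S -> Ind(S), such that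
   every even module map S -> N (N of level 1) extends uniquely to an even
   hat h-module map Ind(S) -> N. *)
Record induced (H : heisData) (S : hmod H) := Induced {
  ind_mod : hatmod H;
  ind_incl : hm_sp S -> hat_sp ind_mod;
  ind_incl_bhom : is_bhom ind_incl;
  ind_univ : forall (N : hatmod H) (phi : hm_sp S -> hat_sp N), is_bhom phi ->
     exists psi, [/\ is_hathom psi, forall s, psi (ind_incl s) = phi s
       & forall psi', is_hathom psi' -> (forall s, psi' (ind_incl s) = phi s) ->
                      forall v, psi' v = psi v]
}.

(* Even h-intertwiners f : R (x) S -> T (tensor product action
   a (r (x) s) = a r (x) s + (-1)^{|a||r|} r (x) a s), as even bilinear maps. *)
Definition intertwiner (H : heisData) (R S T : hmod H)
  (f : hm_sp R -> hm_sp S -> hm_sp T) : Prop :=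
  even_bilinear (hm_str R) (hm_str S) (hm_str T) f /\
  (forall p q a r s, spar (hstr H) p a -> spar (hm_str R) q r ->
     f (hm_act a r) s + ksign p q *: f r (hm_act a s) = hm_act a (f r s)).

(* Main.v *)
Require Import Defs.
From HB Require Import structures.
From mathcomp Require Import all_boot all_algebra.
From mathcomp Require Import complex.
From mathcomp Require Import Rstruct.
From mathcomp Require Import boolp.
From Stdlib Require Import ClassicalEpsilon.
From mathcomp Require Import ring.
Import GRing.Theory.
Local Open Scope ring_scope.
Set Implicit Arguments.
Unset Strict Implicit.


Definition islin (U W : lmodType C) (g : U -> W) :=
  forall (c : C) u v, g (c *: u + v) = c *: g u + g v.

Section Lin.
Variables (U W : lmodType C) (g : U -> W) (hg : islin g).
Lemma lin0 : g 0 = 0.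
Proof. have h := hg 1 0 0; rewrite !scale1r addr0 in h; by apply: (addrI (g 0)); rewrite -h addr0. Qed.
Lemma linD u v : g (u + v) = g u + g v.
Proof. by have := hg 1 u v; rewrite !scale1r. Qed.
Lemma linZ c u : g (c *: u) = c *: g u.
Proof. by rewrite -[c *: u]addr0 hg lin0 addr0. Qed.
Lemma linN u : g (- u) = - g u.
Proof. by rewrite -scaleN1r linZ scaleN1r. Qed.
Lemma linB u v : g (u - v) = g u - g v.
Proof. by rewrite linD linN. Qed.
End Lin.

Section Par.
Variables (W : lmodType C) (s : superStr W).
Lemma sparD p u v : spar s p u -> spar s p v -> spar s p (u + v).
Proof. by move=> hu hv; have := spar_sub 1 hu hv; rewrite scale1r. Qed.
Lemma sparZ p c u : spar s p u -> spar s p (c *: u).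
Proof. by move=> hu; rewrite -[_ *: _]addr0; apply: spar_sub => //; apply: spar0. Qed.
Lemma sparN p u : spar s p u -> spar s p (- u).
Proof. by move=> hu; rewrite -scaleN1r; apply: sparZ. Qed.
Lemma sparB p u v : spar s p u -> spar s p v -> spar s p (u - v).
Proof. by move=> hu hv; apply: sparD => //; apply: sparN. Qed.

Lemma pdec_ex v : exists x : W * W, [/\ spar s false x.1, spar s true x.2 & v = x.1 + x.2].
Proof. by have [v0 [v1 [h0 h1 e]]] := spar_span s v; exists (v0, v1). Qed.
Definition pdec v : W * W := proj1_sig (constructive_indefinite_description _ (pdec_ex v)).
Lemma pdecP v : [/\ spar s false (pdec v).1, spar s true (pdec v).2 & v = (pdec v).1 + (pdec v).2].
Proof. exact: (proj2_sig (constructive_indefinite_description _ (pdec_ex v))). Qed.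
Definition pr (p : bool) v := if p then (pdec v).2 else (pdec v).1.
Lemma pr_spar p v : spar s p (pr p v).
Proof. by case: p; rewrite /pr; case: (pdecP v). Qed.
Lemma pr_sum v : pr false v + pr true v = v.
Proof. by rewrite /pr; case: (pdecP v). Qed.
Lemma pr_uniq v0 v1 : spar s false v0 -> spar s true v1 ->
  pr false (v0 + v1) = v0 /\ pr true (v0 + v1) = v1.
Proof.
move=> h0 h1; set w := v0 + v1.
have e : pr false w - v0 = v1 - pr true w.
  rewrite -[v1](addKr v0) -/w. by rewrite -{2}(pr_sum w) addrA addrK addrC.
have z : pr false w - v0 = 0.
  apply: spar_disj; first by apply: sparB => //; apply: pr_spar.
  by rewrite e; apply: sparB => //; apply: pr_spar.
split; first by apply/eqP; rewrite -subr_eq0 z.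
by apply/eqP; rewrite eq_sym -subr_eq0 -e z.
Qed.
Lemma pr_homE p q v : spar s q v -> pr p v = if p == q then v else 0.
Proof.
move=> hv; case: q hv => hv.
  have [a b] := pr_uniq (spar0 s false) hv; rewrite add0r in a b.
  by case: p.
have [a b] := pr_uniq hv (spar0 s true); rewrite addr0 in a b.
by case: p.
Qed.
Lemma pr_lin p : islin (pr p).
Proof.
move=> c u v.
have [a b] := pr_uniq (sparD (sparZ c (pr_spar false u)) (pr_spar false v))
                      (sparD (sparZ c (pr_spar true u)) (pr_spar true v)).
have E : c *: pr false u + pr false v + (c *: pr true u + pr true v) = c *: u + v.
  by rewrite addrACA -scalerDr !pr_sum.
by rewrite E in a b; case: p.
Qed.
End Par.

Section LMSec.
Variables (U W : lmodType C).
Record LM := LMk { lmf : U -> W; lmlin : islin lmf }.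

Lemma LM_eq (x y : LM) : lmf x = lmf y -> x = y.
Proof.
case: x y => [f hf] [g hg] /= e; subst g.
by rewrite (Prop_irrelevance hf hg).
Qed.

HB.instance Definition _ := gen_eqMixin LM.
HB.instance Definition _ := gen_choiceMixin LM.

Lemma lm0_lin : islin (fun _ : U => (0 : W)).
Proof. by move=> c u v; rewrite scaler0 addr0. Qed.
Definition lm0 := LMk lm0_lin.
Lemma lmadd_lin (x y : LM) : islin (fun u => lmf x u + lmf y u).
Proof. by move=> c u v; rewrite !lmlin scalerDr addrACA. Qed.
Definition lmadd x y := LMk (lmadd_lin x y).
Lemma lmopp_lin (x : LM) : islin (fun u => - lmf x u).
Proof. by move=> c u v; rewrite !lmlin opprD scalerN. Qed.
Definition lmopp x := LMk (lmopp_lin x).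
Lemma lmscale_lin (k : C) (x : LM) : islin (fun u => k *: lmf x u).
Proof. by move=> c u v; rewrite !lmlin scalerDr !scalerA mulrC. Qed.
Definition lmscale k x := LMk (lmscale_lin k x).

Lemma lmaddA : associative lmadd.
Proof. by move=> x y z; apply: LM_eq; apply: funext => u /=; rewrite addrA. Qed.
Lemma lmaddC : commutative lmadd.
Proof. by move=> x y; apply: LM_eq; apply: funext => u /=; rewrite addrC. Qed.
Lemma lmadd0 : left_id lm0 lmadd.
Proof. by move=> x; apply: LM_eq; apply: funext => u /=; rewrite add0r. Qed.
Lemma lmaddN : left_inverse lm0 lmopp lmadd.
Proof. by move=> x; apply: LM_eq; apply: funext => u /=; rewrite addNr. Qed.
HB.instance Definition _ := GRing.isZmodule.Build LM lmaddA lmaddC lmadd0 lmaddN.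

Lemma lmscaleA a b (v : LM) : lmscale a (lmscale b v) = lmscale (a * b) v.
Proof. by apply: LM_eq; apply: funext => u /=; rewrite scalerA. Qed.
Lemma lmscale1 : left_id 1 lmscale.
Proof. by move=> x; apply: LM_eq; apply: funext => u /=; rewrite scale1r. Qed.
Lemma lmscaleDr : right_distributive lmscale +%R.
Proof. by move=> a x y; apply: LM_eq; apply: funext => u /=; rewrite scalerDr. Qed.
Lemma lmscaleDl v : {morph lmscale^~ v: a b / a + b}.
Proof. by move=> a b; apply: LM_eq; apply: funext => u /=; rewrite scalerDl. Qed.
HB.instance Definition _ := GRing.Zmodule_isLmodule.Build C LM lmscaleA lmscale1 lmscaleDr lmscaleDl.

Lemma lmfD (x y : LM) u : lmf (x + y) u = lmf x u + lmf y u. Proof. by []. Qed.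
Lemma lmfZ k (x : LM) u : lmf (k *: x) u = k *: lmf x u. Proof. by []. Qed.
Lemma lmfN (x : LM) u : lmf (- x) u = - lmf x u. Proof. by []. Qed.
Lemma lmf0 u : lmf (0 : LM) u = 0. Proof. by []. Qed.
End LMSec.

Section Key.
Variables (V : lmodType C) (B C1 C2 D w : V).
Definition lc (k1 k2 k3 k4 k5 : C) := k1 *: B + k2 *: C1 + k3 *: C2 + k4 *: D + k5 *: w.
Lemma lcD a1 a2 a3 a4 a5 b1 b2 b3 b4 b5 :
  lc a1 a2 a3 a4 a5 + lc b1 b2 b3 b4 b5 = lc (a1+b1) (a2+b2) (a3+b3) (a4+b4) (a5+b5).
Proof.
rewrite /lc !scalerDl.
by do 4! (rewrite addrACA; congr (_ + _)).
Qed.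
Lemma lcZ k a1 a2 a3 a4 a5 : k *: lc a1 a2 a3 a4 a5 = lc (k*a1) (k*a2) (k*a3) (k*a4) (k*a5).
Proof. by rewrite /lc !scalerDr !scalerA. Qed.
Lemma lcN a1 a2 a3 a4 a5 : - lc a1 a2 a3 a4 a5 = lc (-a1) (-a2) (-a3) (-a4) (-a5).
Proof. by rewrite -scaleN1r lcZ !mulN1r. Qed.
Lemma lcB a1 a2 a3 a4 a5 b1 b2 b3 b4 b5 :
  lc a1 a2 a3 a4 a5 - lc b1 b2 b3 b4 b5 = lc (a1-b1) (a2-b2) (a3-b3) (a4-b4) (a5-b5).
Proof. by rewrite lcN lcD. Qed.
Lemma eB : B = lc 1 0 0 0 0. Proof. by rewrite /lc !scale0r !addr0 scale1r. Qed.
Lemma eC1 : C1 = lc 0 1 0 0 0. Proof. by rewrite /lc !scale0r !addr0 add0r scale1r. Qed.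
Lemma eC2 : C2 = lc 0 0 1 0 0. Proof. by rewrite /lc !scale0r !addr0 !add0r scale1r. Qed.
Lemma eD : D = lc 0 0 0 1 0. Proof. by rewrite /lc !scale0r !addr0 !add0r scale1r. Qed.
Lemma ew : w = lc 0 0 0 0 1. Proof. by rewrite /lc !scale0r !add0r scale1r. Qed.

Lemma key (p q s : bool) (dm dn c : C) :
  (p != q -> c = 0) ->
  let e := ksign p q in let e1 := ksign p s in let e2 := ksign q s in
  let e3 := ksign q (addb p s) in let e4 := ksign p (addb q s) in
  (e1 *: (e2 *: (e *: B + c *: w) - (e2*dn) *: C1) - (e1*dm) *: (e3 *: C2 - (e3*dn) *: D))
  - e *: (e2 *: (e1 *: B - (e1*dm) *: C2) - (e2*dn) *: (e4 *: C1 - (e4*dm) *: (e *: D)))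
  = c *: w.
Proof.
move=> hc; cbv zeta.
rewrite [in LHS]eB [in LHS]eC1 [in LHS]eC2 [in LHS]eD [in LHS]ew.
rewrite [in RHS]ew.
rewrite !(lcZ, lcD, lcB).
have [<-|/hc ->] := eqVneq p q.
  by clear hc; case: p; case: s; rewrite /ksign /=; congr (lc _ _ _ _ _); ring.
by clear hc; case: p; case: q; case: s; rewrite /ksign /=; congr (lc _ _ _ _ _); ring.
Qed.
End Key.

Lemma ksign_sq p q : ksign p q * ksign p q = 1.
Proof. by rewrite /ksign; case: (p && q); rewrite ?mulrNN mulr1. Qed.

Section Cons.
Variables (H : heisData) (R : hmod H) (M : hatmod H).
Notation sR := (hm_str R).
Notation sV := (hat_str M).
Notation sH := (hstr H).
Notation V := (hat_sp M).
Notation RR := (hm_sp R).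
Notation N := (LM RR V).

Lemma hmr_lin a : islin (@hm_act H R a). Proof. by move=> c u v; apply: hm_act_linr. Qed.
Lemma hml_lin r : islin (fun a => @hm_act H R a r).
Proof. by move=> c u v; apply: hm_act_linl. Qed.
Lemma hatr_lin a m : islin (@hat_mode H M a m). Proof. by move=> c u v; apply: hat_linr. Qed.
Lemma hatl_lin m v : islin (fun a => @hat_mode H M a m v).
Proof. by move=> c u v'; apply: hat_linl. Qed.

Definition dm (m : int) : C := if m == 0 then 1 else 0.
Definition tau p (r : RR) := ksign p false *: pr sR false r + ksign p true *: pr sR true r.
Lemma tau_lin p : islin (tau p).
Proof.
move=> c u v; rewrite /tau !(pr_lin sR _ c) !scalerDr !scalerA.
rewrite [ksign p false * c]mulrC [ksign p true * c]mulrC -!scalerA.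
by rewrite addrACA -scalerDr.
Qed.
Lemma tau_hom p q r : spar sR q r -> tau p r = ksign p q *: r.
Proof. by move=> h; rewrite /tau !(pr_homE _ h); case: q h => h /=; rewrite scaler0 ?addr0 ?add0r. Qed.

Definition actp p a m (phi : N) (r : RR) :=
  hat_mode a m (lmf phi (tau p r)) - dm m *: lmf phi (hm_act a (tau p r)).
Lemma actp_lin p a m phi : islin (actp p a m phi).
Proof.
move=> c u v; rewrite /actp (tau_lin p) (lmlin phi) (hatr_lin a m) (hmr_lin a) (lmlin phi).
rewrite scalerDr !scalerA [dm m * c]mulrC -scalerA.
rewrite opprD addrACA -scalerBr //.
Qed.
Definition actf a m phi r := actp false (pr sH false a) m phi r + actp true (pr sH true a) m phi r.
Lemma actf_lin a m phi : islin (actf a m phi).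
Proof. move=> c u v; rewrite /actf. rewrite (actp_lin false) (actp_lin true). by rewrite [in RHS]scalerDr addrACA. Qed.
Definition act a m phi : N := LMk (actf_lin a m phi).

Lemma actp0 p m phi r : actp p 0 m phi r = 0.
Proof.
rewrite /actp (lin0 (hatl_lin _ _)) (lin0 (hml_lin _)) (lin0 (lmlin phi)).
by rewrite scaler0 subr0.
Qed.

Lemma act_hom p q a m phi r : spar sH p a -> spar sR q r ->
  lmf (act a m phi) r = ksign p q *: hat_mode a m (lmf phi r)
                        - (ksign p q * dm m) *: lmf phi (hm_act a r).
Proof.
move=> ha hr; rewrite /= /actf !(pr_homE _ ha).
have E : actp p a m phi r = ksign p q *: hat_mode a m (lmf phi r)
                        - (ksign p q * dm m) *: lmf phi (hm_act a r).
  rewrite /actp (tau_hom p hr) (linZ (hmr_lin a)) !(linZ (lmlin phi)) (linZ (hatr_lin a m)).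
  by rewrite scalerA mulrC.
by case: p ha E => ha E /=; rewrite actp0 ?addr0 ?add0r.
Qed.

Lemma lmf_split (x : N) r : lmf x r = lmf x (pr sR false r) + lmf x (pr sR true r).
Proof. by rewrite -(linD (lmlin x)) pr_sum. Qed.

Lemma LM_ext_hom (x y : N) : (forall q r, spar sR q r -> lmf x r = lmf y r) -> x = y.
Proof.
move=> h; apply: LM_eq; apply: funext => r.
by rewrite lmf_split (lmf_split y) !(h _ _ (pr_spar _ _ _)).
Qed.

Definition Npar p (phi : N) := forall q r, spar sR q r -> spar sV (addb p q) (lmf phi r).
Lemma Nsub p c (u v : N) : Npar p u -> Npar p v -> Npar p (c *: u + v).
Proof. by move=> hu hv q r hr; apply: spar_sub; [apply: hu | apply: hv]. Qed.
Lemma Nspar0 p : Npar p 0.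
Proof. by move=> q r _; apply: spar0. Qed.
Lemma Ndisj (phi : N) : Npar false phi -> Npar true phi -> phi = 0.
Proof.
move=> h0 h1; apply: LM_eq; apply: funext => r /=.
rewrite lmf_split.
rewrite (spar_disj (h0 _ _ (pr_spar _ false r)) (h1 _ _ (pr_spar _ false r))).
rewrite (spar_disj (h1 _ _ (pr_spar _ true r)) (h0 _ _ (pr_spar _ true r))).
by rewrite addr0.
Qed.

Definition compf p (phi : N) r :=
  pr sV p (lmf phi (pr sR false r)) + pr sV (~~ p) (lmf phi (pr sR true r)).
Lemma compf_lin p phi : islin (compf p phi).
Proof.
move=> c u v; rewrite /compf !(pr_lin sR _ c) !(lmlin phi) !(pr_lin sV _ c).
by rewrite [in RHS]scalerDr addrACA.
Qed.
Definition comp p phi : N := LMk (compf_lin p phi).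
Lemma comp_par p phi : Npar p (comp p phi).
Proof.
move=> q r hr /=; rewrite /compf !(pr_homE _ hr).
case: q hr => hr /=; rewrite (lin0 (lmlin phi)) (lin0 (pr_lin _ _)) ?addr0 ?add0r.
  by rewrite addbT; apply: pr_spar.
by rewrite addbF; apply: pr_spar.
Qed.
Lemma comp_sum phi : comp false phi + comp true phi = phi.
Proof.
apply: LM_eq; apply: funext => r /=; rewrite /compf /=.
rewrite addrACA [pr sV true _ + _]addrC !pr_sum.
by rewrite -lmf_split.
Qed.
Lemma Nspan (phi : N) : exists v0 v1, [/\ Npar false v0, Npar true v1 & phi = v0 + v1].
Proof. by exists (comp false phi), (comp true phi); rewrite comp_sum; split => //; apply: comp_par. Qed.

Definition Nstr : superStr N := SuperStr Nsub Nspar0 Ndisj Nspan.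

Lemma actp_linl p c a a' m phi r :
  actp p (c *: a + a') m phi r = c *: actp p a m phi r + actp p a' m phi r.
Proof.
rewrite /actp hat_linl hm_act_linl (lmlin phi).
by rewrite scalerDr scalerA mulrC -scalerA opprD addrACA -scalerBr.
Qed.
Lemma actp_linr p c a m (phi psi : N) r :
  actp p a m (c *: phi + psi) r = c *: actp p a m phi r + actp p a m psi r.
Proof.
rewrite /actp /= hat_linr.
by rewrite scalerDr scalerA mulrC -scalerA opprD addrACA -scalerBr.
Qed.
Lemma act_linl c a a' m (v : N) : act (c *: a + a') m v = c *: act a m v + act a' m v.
Proof.
apply: LM_eq; apply: funext => r /=; rewrite /actf !(pr_lin sH _ c) !actp_linl.
by rewrite [in RHS]scalerDr addrACA.
Qed.
Lemma act_linr c a m (v v' : N) : act a m (c *: v + v') = c *: act a m v + act a m v'.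
Proof.
apply: LM_eq; apply: funext => r /=; rewrite /actf !actp_linr.
by rewrite [in RHS]scalerDr addrACA.
Qed.
Lemma act_par p q a m (v : N) : spar sH p a -> Npar q v -> Npar (addb p q) (act a m v).
Proof.
move=> ha hv s r hr; rewrite (act_hom m v ha hr).
apply: sparB; apply: sparZ.
  by rewrite -addbA; apply: hat_par => //; apply: hv.
have := hv _ _ (hm_act_par ha hr).
by rewrite addbA [addb q p]addbC.
Qed.
Lemma act_comm p q a b (m n : int) (v : N) : spar sH p a -> spar sH q b ->
  act a m (act b n v) - ksign p q *: act b n (act a m v)
  = ((m%:~R * hform a b) * (if m + n == 0 then 1 else 0)) *: v.
Proof.
move=> ha hb; apply: LM_ext_hom => s r hr.
rewrite lmfD lmfN lmfZ lmfZ.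
rewrite (act_hom m (act b n v) ha hr) (act_hom n (act a m v) hb hr).
rewrite (act_hom n v hb (hm_act_par ha hr)) (act_hom m v ha (hm_act_par hb hr)).
rewrite (act_hom m v ha hr) (act_hom n v hb hr).
rewrite !(linB (hatr_lin _ _)) !(linZ (hatr_lin _ _)).
rewrite (hm_act_comm _ ha hb) (linZ (lmlin v)).
set c := (m%:~R * hform a b) * _.
have hc := hat_comm m n (lmf v r) ha hb; rewrite -/c in hc.
have hA : hat_mode a m (hat_mode b n (lmf v r)) =
  ksign p q *: hat_mode b n (hat_mode a m (lmf v r)) + c *: lmf v r.
  by rewrite -hc addrC subrK.
rewrite hA.
apply: key => hpq.
by rewrite /c (hform_even ha hb hpq) mulr0 mul0r.
Qed.

Definition Nmod : hatmod H := @HatMod H N Nstr act act_linl act_linr act_par act_comm.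

End Cons.

From mathcomp Require Import order ssrnum.
Import Order.TTheory Num.Theory.

Lemma lin_in_a (H : heisData) (W : lmodType C) (F G : hsp H -> W) :
  islin F -> islin G -> (forall p a, spar (hstr H) p a -> F a = G a) -> forall a, F a = G a.
Proof.
move=> hF hG h a; rewrite -(pr_sum (hstr H) a) (linD hF) (linD hG).
by rewrite !(h _ _ (pr_spar _ _ _)).
Qed.

Lemma ksignK p q (x : C) : ksign p q * (ksign p q * x) = x.
Proof. by rewrite mulrA ksign_sq mul1r. Qed.

Unset Implicit Arguments.
Set Strict Implicit.
Theorem lemma3p5 (H : heisData) (R S T : hmod H)
  (IS : induced S) (IT : induced T)
  (f : hm_sp R -> hm_sp S -> hm_sp T) :
  intertwiner f ->
  let P (Q : hm_sp R -> hat_sp (ind_mod IS) -> hat_sp (ind_mod IT)) :=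
    [/\ even_bilinear (hm_str R) (hat_str (ind_mod IS)) (hat_str (ind_mod IT)) Q,
        forall r s, Q r (ind_incl IS s) = ind_incl IT (f r s)
      & forall p q a (m : int) r v, spar (hstr H) p a -> spar (hm_str R) q r ->
          hat_mode a m (Q r v)
          = (if m == 0 then Q (hm_act a r) v else 0)
            + ksign p q *: Q r (hat_mode a m v)] in
  exists Q, P Q /\ forall Q', P Q' -> forall r v, Q' r v = Q r v.
Proof.
move=> [[fl fr fp] fi] P.
pose N := Nmod R (ind_mod IT).
have [[iTl iTp] iTa iT0] := ind_incl_bhom IT.
have [[iSl iSp] iSa iS0] := ind_incl_bhom IS.
have fl' : forall s, islin (fun r => ind_incl IT (f r s)).
  by move=> s c u v; rewrite fl iTl.
pose phi (s : hm_sp S) : hat_sp N := LMk (fl' s).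
have phib : is_bhom phi.
  split.
  - split.
    + move=> c u v; apply: LM_eq; apply: funext => r /=.
      by rewrite fr iTl.
    + move=> p s hs q r hr /=; apply: iTp.
      by rewrite addbC; apply: fp.
  - move=> a s; apply: (@lin_in_a H (hat_sp N) (fun a => phi (hm_act a s)) (fun a => hat_mode a 0 (phi s))).
    + by move=> c u v; apply: LM_eq; apply: funext => r /=; rewrite hm_act_linl fr iTl.
    + by move=> c u v; apply: act_linl.
    move=> p {}a ha; apply: LM_ext_hom => q r hr.
    change (ind_incl IT (f r (hm_act a s)) = lmf (act a 0 (phi s)) r).
    rewrite (act_hom 0 _ ha hr) /= -iTa -(fi _ _ _ _ _ ha hr) /dm eqxx mulr1.
    rewrite (linD iTl) scalerDr (linZ iTl) scalerA ksign_sq scale1r.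
    by rewrite addrC addKr.
  - move=> a m s hm; apply: (@lin_in_a H (hat_sp N) (fun a => hat_mode a m (phi s)) (fun _ => 0)).
    + by move=> c u v; apply: act_linl.
    + by move=> c u v; rewrite scaler0 addr0.
    move=> p {}a ha; apply: LM_ext_hom => q r hr.
    change (lmf (act a m (phi s)) r = 0).
    rewrite (act_hom m _ ha hr) /= iT0 // scaler0.
    by rewrite /dm (negbTE (lt0r_neq0 hm)) mulr0 scale0r subrr.
have [psi [[[psil psip] psia] psii psiu]] := ind_univ IS phib.
pose Q r v := lmf (psi v) r.
have PQ : P Q.
  split.
  - split.
    + by move=> c u v w; rewrite /Q (lmlin (psi w)).
    + by move=> c r v w; rewrite /Q psil.
    + move=> p q r v hr hv; rewrite /Q addbC; exact: (psip _ _ hv _ _ hr).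
  - by move=> r s; rewrite /Q psii.
  - move=> p q a m r v ha hr; rewrite /Q psia.
    change (hat_mode a m (lmf (psi v) r) = (if m == 0 then lmf (psi v) (hm_act a r) else 0) +
      ksign p q *: lmf (act a m (psi v)) r).
    rewrite (act_hom m _ ha hr) scalerBr !scalerA ksign_sq scale1r mulrA ksign_sq mul1r.
    by rewrite /dm; case: (m == 0); rewrite ?scale1r ?scale0r addrC subrK ?subr0 ?addr0.
exists Q; split => // Q' [[ql qr qp] qi qa] r v.
have ql' : forall v, islin (fun r => Q' r v) by move=> w c x y; apply: ql.
pose psi' (v : hat_sp (ind_mod IS)) : hat_sp N := LMk (ql' v).
have hpsi' : is_hathom psi'.
  split; first split.
  - by move=> c x y; apply: LM_eq; apply: funext => r' /=; rewrite qr.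
  - move=> p w hw q r' hr /=; rewrite addbC; exact: qp.
  move=> a m w.
  apply: (@lin_in_a H (hat_sp N) (fun a => psi' (hat_mode a m w)) (fun a => hat_mode a m (psi' w))).
  + by move=> c x y; apply: LM_eq; apply: funext => r' /=; rewrite hat_linl qr.
  + by move=> c x y; apply: act_linl.
  move=> p {}a ha; apply: LM_ext_hom => q r' hr.
  change (Q' r' (hat_mode a m w) = lmf (act a m (psi' w)) r').
  rewrite (act_hom m _ ha hr) /= (qa _ _ _ _ _ _ ha hr) scalerDr scalerA ksign_sq scale1r.
  rewrite /dm; case: (m == 0); rewrite ?mulr1 ?mulr0 ?scale1r ?scale0r ?scaler0 ?add0r ?subr0 //.
  by rewrite addrAC subrr add0r.
have hpe : forall s, psi' (ind_incl IS s) = phi s.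
  by move=> s; apply: LM_eq; apply: funext => r'; apply: qi.
have e := psiu _ hpsi' hpe v.
by change (lmf (psi' v) r = lmf (psi v) r); rewrite e.
Qed.
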